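(* Let $n\ge 1$ and let $\mathcal{M}^n$ denote the set of real symmetric positive semidefinite $n\times n$ matrices. Let $F:(\mathcal{M}^n)^n\to\mathbb{R}$ be a function such that (i) $F(A_1,\dots,A_n)\ge 0$ for all $A_1,\dots,A_n\in\mathcal{M}^n$; (ii) $F$ is additive in each variable, i.e. $F(\dots,A+A',\dots)=F(\dots,A,\dots)+F(\dots,A',\dots)$ in each argument, the other arguments being fixed; (iii) $F(A_1,\dots,A_n)=0$ whenever two of the arguments $A_i,A_j$ ($i\neq j$) are proportional matrices of rank one. Then there is a constant $a\ge 0$ such that $F(A_1,\dots,A_n)=a\,D(A_1,\dots,A_n)$ for all $A_1,\dots,A_n\in\mathcal{M}^n$, where $D$ is the mixed discriminant.
   Context: The mixed discriminant $D:(\mathcal{M}^n)^n\to\mathbb{R}$ is the unique symmetric function such that $\det(\lambda_1A_1+\dots+\lambda_mA_m)=\sum_{i_1,\dots,i_n=1}^m\lambda_{i_1}\cdots\lambda_{i_n}D(A_{i_1},\dots,A_{i_n})$ for all $m\in\mathbb{N}$, $A_1,\dots,A_m\in\mathcal{M}^n$ and $\lambda_1,\dots,\lambda_m\ge 0$. Equivalently, $D(A_1,\dots,A_n)=\frac{1}{n!}\sum_{\sigma\in S(n)}\det(A_{\sigma(1)}^{(1)},\dots,A_{\sigma(n)}^{(n)})$, where $A^{(i)}$ denotes the $i$th column of $A$ and $S(n)$ is the symmetric group. *)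

(* Defs.v *)
From HB Require Import structures.
From mathcomp Require Import all_boot all_order all_algebra all_fingroup.
From mathcomp Require Import reals.
Set Implicit Arguments. Unset Strict Implicit. Unset Printing Implicit Defensive.
Import Order.TTheory GRing.Theory Num.Theory.
Local Open Scope ring_scope.

Definition psd (R : realType) (n : nat) (A : 'M[R]_n) : Prop :=
  A^T = A /\ forall v : 'cV[R]_n, 0 <= (v^T *m A *m v) 0 0.

Definition mixed_discr (R : realType) (n : nat) (A : 'I_n -> 'M[R]_n) : R :=
  (n`!%:R)^-1 * \sum_(s : 'S_n) \det (\matrix_(i, j) A (s j) i j).

Definition upd (R : realType) (n : nat) (A : 'I_n -> 'M[R]_n) (i : 'I_n) (X : 'M[R]_n)
  : 'I_n -> 'M[R]_n := fun j => if j == i then X else A j.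

(* Main.v *)
Require Import Defs.
From HB Require Import structures.
From mathcomp Require Import all_boot all_order all_algebra all_fingroup.
From mathcomp Require Import reals ring lra.
From Stdlib Require Import FunctionalExtensionality.
Set Implicit Arguments. Unset Strict Implicit. Unset Printing Implicit Defensive.
Import Order.TTheory GRing.Theory Num.Theory.
Local Open Scope ring_scope.

Section Basics.
Variables (R : realType) (n : nat).

Definition outer (v : 'cV[R]_n) : 'M[R]_n := v *m v^T.

Lemma psd0 : psd (0 : 'M[R]_n).
Proof. split; first by rewrite trmx0. by move=> v; rewrite mulmx0 mul0mx mxE. Qed.

Lemma psdD (A B : 'M[R]_n) : psd A -> psd B -> psd (A + B).
Proof.
move=> [sA pA] [sB pB]; split; first by rewrite linearD /= sA sB.
by move=> v; rewrite mulmxDr mulmxDl mxE addr_ge0.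
Qed.

Lemma psdZ (t : R) (A : 'M[R]_n) : 0 <= t -> psd A -> psd (t *: A).
Proof.
move=> t0 [sA pA]; split; first by rewrite linearZ /= sA.
by move=> v; rewrite -scalemxAr -scalemxAl mxE mulr_ge0.
Qed.

Lemma psd_outer (v : 'cV[R]_n) : psd (outer v).
Proof.
split; first by rewrite /outer trmx_mul trmxK.
move=> w; rewrite /outer mulmxA -(mulmxA _ _ w) !mxE big_ord1.
have -> : (v^T *m w) 0 0 = (w^T *m v) 0 0.
  by rewrite -[v^T *m w]trmxK trmx_mul trmxK mxE.
by rewrite -expr2 sqr_ge0.
Qed.

Lemma upd_psd (A : 'I_n -> 'M[R]_n) i X :
  (forall k, psd (A k)) -> psd X -> forall k, psd (upd A i X k).
Proof. by move=> hA hX k; rewrite /upd; case: eqP. Qed.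

Lemma rank_outer (v : 'cV[R]_n) : v != 0 -> \rank (outer v) = 1%N.
Proof.
move=> vn0; apply/eqP; rewrite eqn_leq; apply/andP; split.
  by apply: leq_trans (mxrankM_maxl _ _) (rank_leq_col _).
rewrite lt0n mxrank_eq0; apply: contra vn0 => /eqP h.
apply/eqP/matrixP => i j; rewrite (ord1 j) !mxE.
have := congr1 (fun M : 'M[R]_n => M i i) h; rewrite /outer !mxE big_ord1 !mxE.
by move/eqP; rewrite mulf_eq0 orbb => /eqP.
Qed.

Lemma outerZ (c : R) v : outer (c *: v) = (c ^+ 2) *: outer v.
Proof. by rewrite /outer linearZ /= -scalemxAl -scalemxAr scalerA expr2. Qed.

Lemma archi0 (x c : R) : (forall N : nat, N%:R * x <= c) -> x <= 0.
Proof.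
move=> h; rewrite leNgt; apply/negP => x0.
have := h (Num.truncn (c / x)).+1.
have := truncnS_gt (c / x); rewrite -(ltr_pM2r x0) mulfVK ?gt_eqF //.
by move=> lt le; move: (lt_le_trans lt le); rewrite ltxx.
Qed.

End Basics.

Section FProps.
Variables (R : realType) (n : nat) (F : ('I_n -> 'M[R]_n) -> R).
Hypothesis Fpos : forall A : 'I_n -> 'M[R]_n, (forall k, psd (A k)) -> 0 <= F A.
Hypothesis Fadd : forall (A : 'I_n -> 'M[R]_n) (i : 'I_n) (B C : 'M[R]_n),
      (forall k, psd (A k)) -> psd B -> psd C ->
      F (upd A i (B + C)) = F (upd A i B) + F (upd A i C).

Section Fix.
Variables (A : 'I_n -> 'M[R]_n) (i : 'I_n).
Hypothesis hA : forall k, psd (A k).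

Lemma f0 : F (upd A i 0) = 0.
Proof.
have := Fadd i hA (psd0 _ _) (psd0 _ _); rewrite addr0 => h.
by apply: (@addrI _ (F (upd A i 0))); rewrite addr0 -h.
Qed.

Lemma fpos X : psd X -> 0 <= F (upd A i X).
Proof. by move=> hX; apply: Fpos; apply: upd_psd. Qed.

Lemma fnat X (m : nat) : psd X -> F (upd A i (m%:R *: X)) = m%:R * F (upd A i X).
Proof.
move=> hX; elim: m => [|m IH]; first by rewrite scale0r mul0r f0.
rewrite -addn1 natrD scalerDl scale1r Fadd ?IH ?mulrDl ?mul1r //.
by apply: psdZ.
Qed.

Lemma fmono X (s u : R) : psd X -> 0 <= s -> s <= u ->
  F (upd A i (s *: X)) <= F (upd A i (u *: X)).
Proof.
move=> hX s0 su; have -> : u *: X = s *: X + (u - s) *: X.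
  by rewrite -scalerDl addrC subrK.
rewrite Fadd ?lerDl ?fpos //; try apply: psdZ => //; by rewrite subr_ge0.
Qed.

Lemma fhom X (t : R) : psd X -> 0 <= t -> F (upd A i (t *: X)) = t * F (upd A i X).
Proof.
move=> hX t0; set a := F (upd A i X); set b := F (upd A i (t *: X)).
have a0 : 0 <= a by apply: fpos.
have key N : (N%:R * b <= N%:R * t * a + a) /\ (N%:R * t * a <= N%:R * b + a).
  set k := Num.truncn (N%:R * t).
  have Nt0 : 0 <= N%:R * t by apply: mulr_ge0.
  have kle : k%:R <= N%:R * t by rewrite truncn_le.
  have klt : N%:R * t < k.+1%:R by apply: truncnS_gt.
  have hb : N%:R * b = F (upd A i ((N%:R * t) *: X)) by rewrite /b -fnat ?scalerA //; apply: psdZ.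
  have h1 : F (upd A i (k%:R *: X)) <= N%:R * b by rewrite hb fmono.
  have h2 : N%:R * b <= F (upd A i (k.+1%:R *: X)) by rewrite hb fmono // ltW.
  rewrite !fnat // in h1 h2; rewrite -/a in h1 h2.
  have hk : k.+1%:R * a = k%:R * a + a by rewrite -addn1 natrD mulrDl mul1r.
  rewrite hk in h2; split.
    by apply: (le_trans h2); rewrite lerD2r ler_wpM2r.
  apply: (@le_trans _ _ (k%:R * a + a)); last by rewrite lerD2r.
  by rewrite -hk ler_wpM2r // ltW.
apply/eqP; rewrite eq_le; apply/andP; split; rewrite -subr_le0.
  apply: (@archi0 _ _ a) => N; rewrite mulrBr mulrA lerBlDl; exact: (key N).1.
apply: (@archi0 _ _ a) => N; rewrite mulrBr mulrA lerBlDl; exact: (key N).2.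
Qed.

End Fix.
End FProps.

Section Jensen.
Variable R : realType.
Lemma jensen (phi : R -> R) : (forall s, 0 <= phi s) ->
  (forall s u, phi (s + u) + phi (s - u) = phi s + phi s) -> phi 1 = phi 0.
Proof.
move=> pos eq; set d := phi 1 - phi 0.
have hm1 : phi (-1) = phi 0 - d.
  have := eq 0 1; rewrite add0r sub0r /d => h; lra.
have key k : (phi k%:R = phi 0 + k%:R * d /\ phi (- k%:R) = phi 0 - k%:R * d) /\
             (phi k.+1%:R = phi 0 + k.+1%:R * d /\ phi (- k.+1%:R) = phi 0 - k.+1%:R * d).
  elim: k => [|k [[IH1 IH2] [IH3 IH4]]].
    by rewrite !mul0r addr0 subr0 oppr0; split => //; rewrite mul1r hm1 /d; split => //; lra.
  split => //; split.
    have := eq k.+1%:R 1.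
    have -> : k.+1%:R - 1 = k%:R :> R by rewrite -natr1 addrK.
    rewrite natr1 IH1 IH3 => h.
    move: h; rewrite -!natr1 !mulrDl !mul1r => h; lra.
  have := eq (- k.+1%:R) 1.
  have -> : - k.+1%:R + 1 = - k%:R :> R by rewrite -natr1 opprD addrNK.
  have -> : - k.+1%:R - 1 = - k.+2%:R :> R by rewrite -[in RHS]natr1 opprD.
  rewrite IH2 IH4 => h.
  move: h; rewrite -!natr1 !mulrDl !mul1r => h; lra.
have h1 : d <= 0.
  apply: (@archi0 _ _ (phi 0)) => N; have := pos (- N%:R); rewrite ((key N).1).2; lra.
have h2 : - d <= 0.
  apply: (@archi0 _ _ (phi 0)) => N; have := pos N%:R; rewrite ((key N).1).1 mulrN; lra.
have : d = 0 by lra.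
rewrite /d => h; lra.
Qed.
End Jensen.

Section GProps.
Variables (R : realType) (n : nat) (F : ('I_n -> 'M[R]_n) -> R).
Hypothesis Fpos : forall A : 'I_n -> 'M[R]_n, (forall k, psd (A k)) -> 0 <= F A.
Hypothesis Fadd : forall (A : 'I_n -> 'M[R]_n) (i : 'I_n) (B C : 'M[R]_n),
      (forall k, psd (A k)) -> psd B -> psd C ->
      F (upd A i (B + C)) = F (upd A i B) + F (upd A i C).
Hypothesis Fvan : forall (A : 'I_n -> 'M[R]_n) (i j : 'I_n),
      (forall k, psd (A k)) -> i != j ->
      \rank (A i) = 1%N -> \rank (A j) = 1%N ->
      (exists c : R, A i = c *: A j) ->
      F A = 0.

Definition ucol (V : 'M[R]_n) (i : 'I_n) (x : 'cV[R]_n) : 'M[R]_n :=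
  \matrix_(a, b) if b == i then x a 0 else V a b.
Definition fam (V : 'M[R]_n) : 'I_n -> 'M[R]_n := fun j => outer (col j V).
Definition G (V : 'M[R]_n) := F (fam V).

Lemma col_ucol V i x : col i (ucol V i x) = x.
Proof. by apply/matrixP => a b; rewrite (ord1 b) !mxE eqxx. Qed.
Lemma col_ucol_ne V i j x : j != i -> col j (ucol V i x) = col j V.
Proof. by move=> ji; apply/matrixP => a b; rewrite !mxE (negPf ji). Qed.
Lemma ucol_id V i : ucol V i (col i V) = V.
Proof. by apply/matrixP => a b; rewrite !mxE; case: eqP => // ->. Qed.
Lemma ucolK V i x y : ucol (ucol V i x) i y = ucol V i y.
Proof. by apply/matrixP => a b; rewrite !mxE; case: eqP. Qed.

Lemma fam_psd V k : psd (fam V k).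
Proof. exact: psd_outer. Qed.

Lemma upd_fam V i x : upd (fam V) i (outer x) = fam (ucol V i x).
Proof.
apply: functional_extensionality => j; rewrite /upd /fam.
case: eqP => [->|/eqP ji]; first by rewrite col_ucol.
by rewrite col_ucol_ne.
Qed.

Lemma GE V i x : G (ucol V i x) = F (upd (fam V) i (outer x)).
Proof. by rewrite upd_fam. Qed.

Lemma Gpos V : 0 <= G V.
Proof. by apply: Fpos => k; apply: fam_psd. Qed.

Lemma outer0 : outer (0 : 'cV[R]_n) = 0.
Proof. by rewrite /outer mul0mx. Qed.

Lemma G0 V i : col i V = 0 -> G V = 0.
Proof.
move=> h; rewrite -(ucol_id V i) h GE outer0; apply: f0 => //.
exact: fam_psd.
Qed.

Lemma Gscale V i c x : G (ucol V i (c *: x)) = c ^+ 2 * G (ucol V i x).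
Proof.
rewrite !GE outerZ fhom //; [exact: fam_psd | exact: psd_outer | exact: sqr_ge0].
Qed.

Lemma outer_par (x y : 'cV[R]_n) :
  outer (x + y) + outer (x - y) = ((outer x + outer x) + outer y) + outer y.
Proof. by apply/matrixP => a b; rewrite !mxE !big_ord1 !mxE; ring. Qed.

Lemma Gpar V i x y : G (ucol V i (x + y)) + G (ucol V i (x - y)) =
  G (ucol V i x) + G (ucol V i x) + G (ucol V i y) + G (ucol V i y).
Proof.
have hf := @fam_psd V; have ho := @psd_outer R n.
rewrite !GE -Fadd // outer_par !Fadd //; repeat apply: psdD => //.
Qed.

Lemma Gvan V i j c : j != i -> col i V = c *: col j V -> G V = 0.
Proof.
move=> ji hc; have [hj|hj] := eqVneq (col j V) 0; first exact: (G0 hj).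
have [c0|c0] := eqVneq c 0; first by apply: (G0 (i := i)); rewrite hc c0 scale0r.
apply: (Fvan (i := i) (j := j)) => //.
- exact: fam_psd.
- by rewrite eq_sym.
- rewrite /fam hc; apply: rank_outer; by rewrite scaler_eq0 negb_or c0.
- exact: rank_outer.
- by exists (c ^+ 2); rewrite /fam hc outerZ.
Qed.

Lemma Gshear V i j x t : j != i ->
  G (ucol V i (x + t *: col j V)) = G (ucol V i x).
Proof.
move=> ji.
pose phi (s : R) := G (ucol V i (x + (s * t) *: col j V)).
have := @jensen R phi.
have -> : phi 1 = G (ucol V i (x + t *: col j V)) by rewrite /phi mul1r.
have -> : phi 0 = G (ucol V i x) by rewrite /phi mul0r scale0r addr0.
apply; first by move=> s; apply: Gpos.
move=> s u; rewrite /phi.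
have := Gpar V i (x + (s * t) *: col j V) ((u * t) *: col j V).
rewrite -addrA -scalerDl -mulrDl -addrA -scalerBl -mulrBl => ->.
rewrite (@Gvan (ucol V i ((u * t) *: col j V)) i j (u * t)) //.
  by rewrite !addr0.
by rewrite col_ucol col_ucol_ne.
Qed.

Lemma Gsum V i x (c : 'I_n -> R) :
  G (ucol V i (x + \sum_(j | j != i) c j *: col j V)) = G (ucol V i x).
Proof.
rewrite unlock /=; elim: (index_enum _) x => [|j r IH] x /=.
  by rewrite addr0.
case: ifP => ji; last exact: IH.
by rewrite addrA IH Gshear.
Qed.

End GProps.

Section Det.
Variables (R : realType) (n : nat).

Lemma mulmx_cols (V : 'M[R]_n) (c : 'cV[R]_n) :
  V *m c = \sum_j c j 0 *: col j V.
Proof.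
apply/matrixP => a b; rewrite (ord1 b) !mxE summxE; apply: eq_bigr => j _.
by rewrite mxE [col _ _ _ _]mxE mulrC.
Qed.

Lemma ucol_mul (V : 'M[R]_n) i (c : 'cV[R]_n) :
  ucol V i (V *m c) = V *m ucol 1%:M i c.
Proof.
apply/matrixP => a b; rewrite /ucol !mxE; case: eqP => [->|/eqP bi].
  by rewrite ?mxE; apply: eq_bigr => k _; rewrite ?mxE eqxx.
rewrite -{1}[V](mulmx1 V) ?mxE; apply: eq_bigr => k _.
by rewrite ?mxE (negPf bi).
Qed.

Lemma det_ucol1 i (c : 'cV[R]_n) : \det (ucol 1%:M i c) = c i 0.
Proof.
rewrite /ucol (expand_det_row _ i) (bigD1 i) //= big1 ?addr0; last first.
  by move=> j ji; rewrite !mxE (negPf ji) eq_sym (negPf ji) mul0r.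
rewrite !mxE eqxx /cofactor.
have -> : row' i (col' i (ucol 1%:M i c)) = 1%:M.
  apply/matrixP => a b; rewrite !mxE eq_sym (negPf (neq_lift _ _)).
  by rewrite (inj_eq lift_inj).
by rewrite det1 -signr_odd addnn odd_double expr0 !mulr1.
Qed.

Lemma det_ucol (V : 'M[R]_n) i x : \det V != 0 ->
  \det (ucol V i x) = (invmx V *m x) i 0 * \det V.
Proof.
move=> dV; have uV : V \in unitmx by rewrite unitmxE unitfE.
by rewrite -{1}(mulKVmx uV x) ucol_mul det_mulmx det_ucol1 mulrC.
Qed.

Lemma sing_vec (V : 'M[R]_n) : \det V = 0 ->
  exists2 w : 'cV[R]_n, w != 0 & V *m w = 0.
Proof.
move=> dV.
have nf : ~~ row_free V^T by rewrite row_free_unit unitmx_tr unitmxE unitfE dV eqxx.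
rewrite -kermx_eq0 in nf.
have [r hr] : exists r, row r (kermx V^T) != 0.
  apply/existsP; move: nf; apply: contraR; rewrite negb_exists => /forallP h.
  by apply/eqP/row_matrixP => r; rewrite row0; apply/eqP; move: (h r); rewrite negbK.
exists (row r (kermx V^T))^T; first by rewrite trmx_eq0.
have h : row r (kermx V^T) *m V^T = 0 by rewrite -row_mul mulmx_ker row0.
by have := congr1 trmx h; rewrite trmx_mul trmxK trmx0.
Qed.

End Det.

Section Main.
Variables (R : realType) (n : nat) (F : ('I_n -> 'M[R]_n) -> R).
Hypothesis Fpos : forall A : 'I_n -> 'M[R]_n, (forall k, psd (A k)) -> 0 <= F A.
Hypothesis Fadd : forall (A : 'I_n -> 'M[R]_n) (i : 'I_n) (B C : 'M[R]_n),
      (forall k, psd (A k)) -> psd B -> psd C ->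
      F (upd A i (B + C)) = F (upd A i B) + F (upd A i C).
Hypothesis Fvan : forall (A : 'I_n -> 'M[R]_n) (i j : 'I_n),
      (forall k, psd (A k)) -> i != j ->
      \rank (A i) = 1%N -> \rank (A j) = 1%N ->
      (exists c : R, A i = c *: A j) ->
      F A = 0.

Local Notation G := (G F).

Lemma col_ext (A B : 'M[R]_n) : (forall j, col j A = col j B) -> A = B.
Proof.
move=> h; apply/matrixP => a b.
by have := congr1 (fun M : 'cV[R]_n => M a 0) (h b); rewrite !mxE.
Qed.

Lemma Gsing (V : 'M[R]_n) : \det V = 0 -> G V = 0.
Proof.
move=> /sing_vec [w wn0 hw].
have [i hi] : exists i, w i 0 != 0.
  apply/existsP; move: wn0; apply: contraR; rewrite negb_exists => /forallP h.
  apply/eqP/matrixP => a b; rewrite (ord1 b) mxE; apply/eqP; move: (h a); by rewrite negbK.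
pose c := (w i 0)^-1 *: w.
have hc : V *m c = 0 by rewrite /c -scalemxAr hw scaler0.
have ci : c i 0 = 1 by rewrite /c mxE mulVf.
rewrite mulmx_cols (bigD1 i) //= ci scale1r in hc.
rewrite -(ucol_id V i) -(Gsum Fpos Fadd Fvan V i (col i V) (fun j => c j 0)) hc.
by apply: (@G0 _ _ _ Fadd _ i); rewrite col_ucol.
Qed.

Lemma Grepl (V : 'M[R]_n) i x : \det V != 0 ->
  G (ucol V i x) = ((invmx V *m x) i 0) ^+ 2 * G V.
Proof.
move=> dV; have uV : V \in unitmx by rewrite unitmxE unitfE.
set c := invmx V *m x.
have hx : x = V *m c by rewrite /c mulKVmx.
rewrite {1}hx mulmx_cols (bigD1 i) //= (Gsum Fpos Fadd Fvan) (Gscale Fpos Fadd).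
by rewrite ucol_id.
Qed.

Definition K := G 1%:M.
Definition Phi (V : 'M[R]_n) := G V - K * \det V ^+ 2.

Lemma Phi_sing (V : 'M[R]_n) : \det V = 0 -> Phi V = 0.
Proof. by move=> h; rewrite /Phi Gsing // h expr0n mulr0 subr0. Qed.

Lemma Phi_repl (V : 'M[R]_n) i x : \det V != 0 ->
  Phi (ucol V i x) = ((invmx V *m x) i 0) ^+ 2 * Phi V.
Proof. by move=> dV; rewrite /Phi Grepl // det_ucol // /Phi; ring. Qed.

Lemma Phi1 : Phi 1%:M = 0.
Proof. by rewrite /Phi det1 expr1n mulr1 /K subrr. Qed.

Lemma col_xcol i k (V : 'M[R]_n) j : col j (xcol i k V) = col (tperm i k j) V.
Proof. by apply/matrixP => a b; rewrite !mxE. Qed.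

Lemma G_swap (V : 'M[R]_n) i k : i != k -> G (xcol i k V) = G V.
Proof.
move=> ik; have ki : k != i by rewrite eq_sym.
set a := col i V; set b := col k V.
pose V1 := ucol V i (col i V + 1 *: col k V).
pose V2 := ucol V1 k (col k V1 + (-1) *: col i V1).
pose V3 := ucol V2 i (col i V2 + 1 *: col k V2).
pose V4 := ucol V3 k ((-1) *: col k V3).
have g1 : G V1 = G V by rewrite /V1 (Gshear Fpos Fadd Fvan) // ucol_id.
have g2 : G V2 = G V1 by rewrite /V2 (Gshear Fpos Fadd Fvan) // ucol_id.
have g3 : G V3 = G V2 by rewrite /V3 (Gshear Fpos Fadd Fvan) // ucol_id.
have g4 : G V4 = G V3.
  by rewrite /V4 (Gscale Fpos Fadd) ucol_id sqrrN expr1n mul1r.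
have c1i : col i V1 = a + b by rewrite /V1 col_ucol scale1r.
have c1j j : j != i -> col j V1 = col j V by move=> ji; rewrite /V1 col_ucol_ne.
have c2k : col k V2 = - a.
  by rewrite /V2 col_ucol c1i c1j // scaleN1r opprD addrCA subrr addr0.
have c2j j : j != k -> col j V2 = col j V1 by move=> jk; rewrite /V2 col_ucol_ne.
have c3i : col i V3 = b.
  by rewrite /V3 col_ucol c2k c2j // c1i scale1r addrAC subrr add0r.
have c3j j : j != i -> col j V3 = col j V2 by move=> ji; rewrite /V3 col_ucol_ne.
have c4k : col k V4 = a by rewrite /V4 col_ucol c3j // c2k scaleN1r opprK.
have c4j j : j != k -> col j V4 = col j V3 by move=> jk; rewrite /V4 col_ucol_ne.
have -> : xcol i k V = V4.
  apply: col_ext => j; rewrite col_xcol.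
  have [->|jk] := eqVneq j k; first by rewrite tpermR c4k.
  have [->|ji] := eqVneq j i; first by rewrite tpermL c4j // c3i.
  by rewrite tpermD 1?eq_sym // c4j // c3j // c2j // c1j.
by rewrite g4 g3 g2 g1.
Qed.

Lemma det_xcol2 (V : 'M[R]_n) i k : \det (xcol i k V) ^+ 2 = \det V ^+ 2.
Proof. by rewrite /xcol col_permE det_mulmx det_perm exprMn sqrr_sign mulr1. Qed.

Lemma Phi_swap (V : 'M[R]_n) i k : Phi (xcol i k V) = Phi V.
Proof.
have [->|ik] := eqVneq i k.
  by congr Phi; apply: col_ext => j; rewrite col_xcol tperm1 perm1.
by rewrite /Phi G_swap // det_xcol2.
Qed.

Lemma Phi_all (V : 'M[R]_n) : Phi V = 0.
Proof.
suff Q : forall k, forall V : 'M[R]_n, (forall j : 'I_n, (k <= j)%N -> col j V = col j 1%:M) -> Phi V = 0.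
  by apply: (Q n) => j; rewrite leqNgt ltn_ord.
elim => [|k IH] {}V hV.
  have -> : V = 1%:M by apply: col_ext => j; apply: hV.
  exact: Phi1.
have [kn|nk] := ltnP k n; last first.
  by apply: IH => j kj; move: (leq_trans nk kj); rewrite leqNgt ltn_ord.
pose kk := Ordinal kn.
have [dV|dV] := eqVneq (\det V) 0; first exact: Phi_sing.
have uV : V \in unitmx by rewrite unitmxE unitfE.
pose e : 'cV[R]_n := col kk 1%:M.
pose c := invmx V *m e.
have : [exists i : 'I_n, (i <= k)%N && (c i 0 != 0)].
  apply: contraT; rewrite negb_exists => /forallP h.
  have he : V *m c = e by rewrite /c mulKVmx.
  have := congr1 (fun M : 'cV[R]_n => M kk 0) he.
  rewrite /e !mxE eqxx big1 => [/eqP|j _]; first by rewrite eq_sym oner_eq0.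
  have [jk|kj] := leqP (val j) k.
    by move: (h j); rewrite jk /= negbK => /eqP ->; rewrite mulr0.
  have := congr1 (fun M : 'cV[R]_n => M kk 0) (hV j kj); rewrite !mxE => ->.
  have : kk != j by rewrite -val_eqE /= neq_ltn kj.
  by move/negPf ->; rewrite mul0r.
move/existsP => [i /andP [ik ci]].
pose V2 := ucol V i e.
have dV2 : \det V2 != 0 by rewrite /V2 det_ucol // mulf_neq0.
have P2 : Phi V2 = 0.
  rewrite -(Phi_swap V2 i kk); apply: IH => j kj; rewrite col_xcol.
  have [jkk|jkk] := eqVneq j kk; first by rewrite jkk tpermR /V2 col_ucol.
  have kj' : (k < j)%N by rewrite ltn_neqAle kj andbT; move: jkk; apply: contra => /eqP h; apply/eqP/val_inj.
  have ji : j != i by apply/eqP => h; move: kj'; rewrite h ltnNge ik.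
  rewrite tpermD 1?eq_sym //; rewrite /V2 col_ucol_ne //; exact: hV.
have -> : V = ucol V2 i (col i V) by rewrite /V2 ucolK ucol_id.
by rewrite Phi_repl // P2 mulr0.
Qed.

End Main.

Section MD.
Variables (R : realType) (n : nat).

Lemma mixed_discr_fam (V : 'M[R]_n) :
  mixed_discr (fun j => outer (col j V)) = (n`!%:R)^-1 * \det V ^+ 2.
Proof.
rewrite /mixed_discr; congr (_ * _).
have h (s : 'S_n) : \det (\matrix_(i, j) outer (col (s j) V) i j) =
           \det V * ((-1) ^+ s * \prod_j V j (s j)).
  have -> : \matrix_(i, j) outer (col (s j) V) i j =
            col_perm s V *m diag_mx (\row_j V j (s j)).
    by rewrite mul_mx_diag; apply/matrixP => a b; rewrite !mxE big_ord1 !mxE.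
  rewrite det_mulmx det_diag col_permE det_mulmx det_perm odd_permV.
  by rewrite -mulrA; congr (_ * (_ * _)); apply: eq_bigr => j _; rewrite mxE.
rewrite (eq_bigr _ (fun s _ => h s)) -mulr_sumr expr2; congr (_ * _).
Qed.

Lemma mixed_discr_add (A : 'I_n -> 'M[R]_n) k (B C : 'M[R]_n) :
  mixed_discr (upd A k (B + C)) = mixed_discr (upd A k B) + mixed_discr (upd A k C).
Proof.
rewrite /mixed_discr -mulrDr; congr (_ * _); rewrite -big_split /=.
apply: eq_bigr => s _.
set M := fun X : 'M[R]_n => \matrix_(i, j) upd A k X (s j) i j.
rewrite -!(det_tr (M _)).
have := @determinant_multilinear R n (M (B + C))^T (M B)^T (M C)^T ((s^-1)%g k) 1 1.
rewrite !mul1r; apply; rewrite ?scale1r.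
- apply/rowP => j; rewrite !mxE /upd (permKV s k).
  by case: eqP => // _; rewrite !mxE.
- by apply/matrixP => a b; rewrite !mxE /upd; case: eqP => // h;
    have := congr1 (s^-1)%g h; rewrite permK => /eqP;
    by rewrite eq_sym (negPf (neq_lift _ _)).
- by apply/matrixP => a b; rewrite !mxE /upd; case: eqP => // h;
    have := congr1 (s^-1)%g h; rewrite permK => /eqP;
    by rewrite eq_sym (negPf (neq_lift _ _)).
Qed.

Lemma mixed_discr0 (A : 'I_n -> 'M[R]_n) k : mixed_discr (upd A k 0) = 0.
Proof.
have := mixed_discr_add A k 0 0; rewrite addr0 => h.
by apply: (@addrI _ (mixed_discr (upd A k 0))); rewrite addr0 -h.
Qed.

Lemma mixed_discr_sum (A : 'I_n -> 'M[R]_n) k (s : seq 'cV[R]_n) :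
  mixed_discr (upd A k (\sum_(u <- s) outer u)) =
  \sum_(u <- s) mixed_discr (upd A k (outer u)).
Proof.
elim: s => [|u s IH]; first by rewrite !big_nil mixed_discr0.
by rewrite !big_cons mixed_discr_add IH.
Qed.

End MD.

Section LDL.
Variables (R : realType) (n : nat).
Implicit Types (A : 'M[R]_n) (v x : 'cV[R]_n).

Definition bf A (v w : 'cV[R]_n) := (v^T *m A *m w) 0 0.

Lemma bf_exp A v x t :
  bf A (v + t *: x) (v + t *: x) =
  bf A v v + t * (bf A v x + bf A x v) + t ^+ 2 * bf A x x.
Proof.
rewrite /bf; have -> : (v + t *: x)^T = v^T + t *: x^T by rewrite linearD linearZ.
rewrite !mulmxDl !mulmxDr -!scalemxAl -!scalemxAr.
rewrite !mxE; ring.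
Qed.

Definition ev (k : 'I_n) : 'cV[R]_n := delta_mx k 0.

Lemma bf_ev_r A v k : bf A v (ev k) = (v^T *m col k A) 0 0.
Proof. by rewrite /bf /ev -mulmxA -colE. Qed.

Lemma bf_ev_l A v k : bf A (ev k) v = (row k A *m v) 0 0.
Proof. by rewrite /bf /ev trmx_delta -rowE. Qed.

Lemma bf_ev A k j : bf A (ev k) (ev j) = A k j.
Proof.
rewrite bf_ev_l /ev -colE !mxE.
done.
Qed.

Lemma psd_diag0 A k j : psd A -> A k k = 0 -> A k j = 0.
Proof.
move=> [sA pA] hkk.
have hjk : A j k = A k j by rewrite -{1}sA mxE.
apply/eqP; apply: contraT => hn.
pose t := - (A j j + 1) / (2 * A k j).
have := pA (ev j + t *: ev k).
rewrite -/(bf A _ _) bf_exp !bf_ev hkk hjk mulr0 addr0.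
have -> : t * (A k j + A k j) = - (A j j + 1).
  by rewrite /t; field.
by rewrite opprD addrA subrr sub0r oppr_ge0 ler10.
Qed.

Lemma bf_outer (a v : 'cV[R]_n) : bf (outer a) v v = ((v^T *m a) 0 0) ^+ 2.
Proof.
rewrite /bf /outer mulmxA -(mulmxA _ _ v) [LHS]mxE big_ord1.
have -> : (a^T *m v) 0 0 = (v^T *m a) 0 0.
  by rewrite -[a^T *m v]trmxK trmx_mul trmxK mxE.
by rewrite expr2.
Qed.

Lemma outer_entry (a : 'cV[R]_n) i j : outer a i j = a i 0 * a j 0.
Proof. by rewrite /outer !mxE big_ord1 !mxE. Qed.

Lemma schur A k : psd A -> 0 < A k k ->
  psd (A - (A k k)^-1 *: outer (col k A)).
Proof.
move=> [sA pA] p0; set p := A k k; set a := col k A.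
split.
  by rewrite linearB linearZ /= sA (psd_outer a).1.
move=> v; set s := (v^T *m a) 0 0.
have -> : (v^T *m (A - p^-1 *: outer a) *m v) 0 0 = bf A v v - p^-1 * bf (outer a) v v.
  by rewrite /bf mulmxBr mulmxBl -scalemxAr -scalemxAl !mxE.
rewrite bf_outer -/s.
have hl : bf A v (ev k) = s by rewrite bf_ev_r.
have hr : bf A (ev k) v = s.
  rewrite bf_ev_l /s -{1}sA -tr_col -/a.
  by rewrite -[a^T *m v]trmxK trmx_mul trmxK [in LHS]mxE.
have := pA (v + (- s / p) *: ev k).
rewrite -/(bf A _ _) bf_exp hl hr bf_ev -/p.
have -> : bf A v v + - s / p * (s + s) + (- s / p) ^+ 2 * p = bf A v v - p^-1 * s ^+ 2.
  by field; rewrite gt_eqF.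
by [].
Qed.

Lemma ldl A : psd A -> exists s : seq 'cV[R]_n, A = \sum_(u <- s) outer u.
Proof.
suff H : forall m A, psd A -> (forall i j : 'I_n, (i < n - m)%N -> A i j = 0) ->
  exists s : seq 'cV[R]_n, A = \sum_(u <- s) outer u.
  by move=> hA; apply: (H n) => // i j; rewrite subnn.
elim => [|m IH] {}A hA hz.
  exists [::]; rewrite big_nil; apply/matrixP => i j; rewrite mxE; apply: hz.
  by rewrite subn0.
have [nm|mn] := leqP n m.
  apply: IH => // i j; move: (ltn_ord i); rewrite -subn_eq0 in nm; rewrite (eqP nm).
  by [].
have pn : (n - m.+1 < n)%N by rewrite ltn_subrL; apply/andP; split => //; apply: leq_ltn_trans mn.
pose kk := Ordinal pn.
have hsub : (n - m = (n - m.+1).+1)%N by rewrite subnSK.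
have [d0|d0] := eqVneq (A kk kk) 0.
  apply: IH => // i j; rewrite hsub ltnS leq_eqVlt => /orP [/eqP ik|ik]; last exact: hz.
  have -> : i = kk by apply/val_inj.
  exact: psd_diag0.
have dpos : 0 < A kk kk.
  rewrite lt_def d0 /=; have := hA.2 (ev kk); rewrite -/(bf A _ _) bf_ev //.
set a := col kk A.
pose u := (Num.sqrt (A kk kk))^-1 *: a.
have hu : outer u = (A kk kk)^-1 *: outer a.
  by rewrite /u outerZ exprVn sqr_sqrtr // ltW.
have [s hs] : exists s : seq 'cV[R]_n, A - outer u = \sum_(w <- s) outer w.
  apply: IH; first by rewrite hu; apply: schur.
  move=> i j; rewrite hsub ltnS leq_eqVlt => /orP [/eqP ik|ik].
    have -> : i = kk by apply/val_inj.
    rewrite hu !mxE big_ord1 !mxE mulrA mulVf // mul1r.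
    by rewrite -{2}hA.1 mxE subrr.
  by rewrite hu !mxE big_ord1 !mxE (hz i j ik) (hz i kk ik) mul0r mulr0 subrr.
by exists (u :: s); rewrite big_cons -hs addrC subrK.
Qed.

End LDL.

Lemma psd_sum (R : realType) (n : nat) (s : seq 'cV[R]_n) : psd (\sum_(u <- s) outer u).
Proof.
elim: s => [|u s IH]; first by rewrite big_nil; apply: psd0.
by rewrite big_cons; apply: psdD => //; apply: psd_outer.
Qed.

Lemma upd_id (R : realType) (n : nat) (A : 'I_n -> 'M[R]_n) k : upd A k (A k) = A.
Proof. by apply: functional_extensionality => j; rewrite /upd; case: eqP => // ->. Qed.

Unset Implicit Arguments. Set Strict Implicit.

Theorem theorem2 (R : realType) (n : nat) (F : ('I_n -> 'M[R]_n) -> R) :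
  (0 < n)%N ->
  (* (i) nonnegativity *)
  (forall A : 'I_n -> 'M[R]_n, (forall k, psd (A k)) -> 0 <= F A) ->
  (* (ii) additivity in each variable *)
  (forall (A : 'I_n -> 'M[R]_n) (i : 'I_n) (B C : 'M[R]_n),
      (forall k, psd (A k)) -> psd B -> psd C ->
      F (upd A i (B + C)) = F (upd A i B) + F (upd A i C)) ->
  (* (iii) vanishing on two proportional rank-one arguments *)
  (forall (A : 'I_n -> 'M[R]_n) (i j : 'I_n),
      (forall k, psd (A k)) -> i != j ->
      \rank (A i) = 1%N -> \rank (A j) = 1%N ->
      (exists c : R, A i = c *: A j) ->
      F A = 0) ->
  exists a : R, 0 <= a /\
    forall A : 'I_n -> 'M[R]_n, (forall k, psd (A k)) -> F A = a * mixed_discr A.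
Proof.
move=> n0 Fpos Fadd Fvan.
exists (K F * n`!%:R); split.
  by apply: mulr_ge0; [apply: Gpos | apply: ler0n].
have Fsum (A : 'I_n -> 'M[R]_n) k (s : seq 'cV[R]_n) : (forall j, psd (A j)) ->
    F (upd A k (\sum_(u <- s) outer u)) = \sum_(u <- s) F (upd A k (outer u)).
  move=> hA; elim: s => [|u s IH]; first by rewrite !big_nil f0.
  by rewrite !big_cons Fadd ?IH //; [apply: psd_outer | apply: psd_sum].
suff Hk : forall k (A : 'I_n -> 'M[R]_n) (V : 'M[R]_n), (forall j, psd (A j)) ->
    (forall j : 'I_n, (k <= j)%N -> A j = outer (col j V)) ->
    F A = K F * n`!%:R * mixed_discr A.
  by move=> A hA; apply: (Hk n A 0) => // j; rewrite leqNgt ltn_ord.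
elim => [|k IH] A V hA hV.
  have -> : A = fam V by apply: functional_extensionality => j; apply: hV.
  have := Phi_all Fpos Fadd Fvan V; rewrite /Phi => /eqP; rewrite subr_eq0 => /eqP.
  rewrite /G => ->; rewrite /fam mixed_discr_fam.
  have nz : (n`!%:R : R) != 0 by rewrite pnatr_eq0 -lt0n fact_gt0.
  by field.
have [kn|nk] := ltnP k n; last first.
  by apply: (IH A V) => // j kj; move: (leq_trans nk kj); rewrite leqNgt ltn_ord.
pose kk := Ordinal kn.
have [s hs] := ldl (hA kk).
rewrite -(upd_id A kk) hs Fsum // mixed_discr_sum mulr_sumr.
apply: eq_bigr => u _; apply: (IH _ (ucol V kk u)); first by apply: upd_psd => //; apply: psd_outer.
move=> j kj; rewrite /upd; case: eqP => [->|/eqP jk]; first by rewrite col_ucol.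
rewrite col_ucol_ne //; apply: hV; rewrite ltn_neqAle kj andbT.
by apply: contra jk => /eqP h; apply/eqP/val_inj.
Qed.
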